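(* Let $f$ be an entire transcendental function of perfectly regular growth having order $\rho$ and type $\tau$. Then the quasi-optimal radius satisfies \[ r_\diamond(n)\sim\Big(\frac{n}{\tau\rho}\Big)^{1/\rho}\qquad(n\to\infty). \]
   Context: $M(r)=\max_\theta|f(re^{i\theta})|$. The order is $\rho=\limsup_{r\to\infty}\log\log M(r)/\log r$. An entire transcendental function of order $0<\rho<\infty$ is of perfectly regular growth if the limit $\tau=\lim_{r\to\infty}\log M(r)/r^\rho$ exists and is positive and finite; $\tau$ is its type. The quasi-optimal radius $r_\diamond(n)$ is the unique minimizer over $r>0$ of $r^{-n}M(r)$ (defined for $n$ larger than the index of the first nonzero Taylor coefficient). *)

(* Defs.v *)
From Stdlib Require Import Reals.
From Coquelicot Require Export Coquelicot.
Open Scope R_scope.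

Definition entire_with_coeffs (a : nat -> C) (f : C -> C) : Prop :=
  forall z : C, is_series (fun n => (a n * pow_n z n)%C) (f z).

(* transcendental: infinitely many nonzero Taylor coefficients (not a polynomial) *)
Definition transcendental_coeffs (a : nat -> C) : Prop :=
  forall N : nat, exists n : nat, (N <= n)%nat /\ a n <> 0%C.

(* maximum modulus M(r) = max_theta |f(r e^{i theta})| (a supremum, finite for
   continuous f, hence [real] of the Rbar least upper bound). *)
Definition max_modulus (f : C -> C) (r : R) : R :=
  real (Lub_Rbar (fun y : R => exists t : R,
          y = Cmod (f ((r * cos t)%R, (r * sin t)%R)))).

Definition limsup_at_pinfty (g : R -> R) (l : R) : Prop :=
  forall eps : R, 0 < eps ->
    (exists R0 : R, forall r : R, R0 < r -> g r < l + eps) /\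
    (forall R0 : R, exists r : R, R0 < r /\ l - eps < g r).

Definition has_order (f : C -> C) (rho : R) : Prop :=
  limsup_at_pinfty (fun r => ln (ln (max_modulus f r)) / ln r) rho.

Definition perfectly_regular_growth (f : C -> C) (rho tau : R) : Prop :=
  0 < rho /\ has_order f rho /\ 0 < tau /\
  is_lim (fun r => ln (max_modulus f r) / Rpower r rho) p_infty tau.

Definition is_quasi_optimal_radius (f : C -> C) (n : nat) (r : R) : Prop :=
  0 < r /\
  forall s : R, 0 < s -> s <> r ->
    max_modulus f r / r ^ n < max_modulus f s / s ^ n.

(* Main.v *)
Require Import Defs.
From Stdlib Require Import Reals Lra Lia Classical.
From Coquelicot Require Import Coquelicot.
Open Scope R_scope.

Lemma pow_n_Cpow (z : C) n : pow_n z n = Cpow z n.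
Proof. induction n; simpl; [reflexivity|]. rewrite IHn. reflexivity. Qed.

Lemma norm_sum_n_le (t : nat -> C) (b : nat -> R) :
  (forall j, Cmod (t j) <= b j) -> forall n, Cmod (sum_n t n) <= sum_n b n.
Proof.
  intros H n; induction n.
  - rewrite !sum_O. apply H.
  - rewrite !sum_Sn. eapply Rle_trans. apply (norm_triangle (sum_n t n) (t (S n))).
    apply Rplus_le_compat; [apply IHn | apply H].
Qed.

Lemma series_norm_le (t : nat -> C) s (b : nat -> R) B :
  is_series t s -> (forall j, Cmod (t j) <= b j) -> is_series b B -> Cmod s <= B.
Proof.
  intros Ht Hb HB.
  assert (H1 : is_lim_seq (fun n => Cmod (sum_n t n)) (Cmod s)).
  { unfold is_lim_seq. eapply filterlim_comp. apply Ht. apply (filterlim_norm (V := C_NormedModule)). }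
  assert (H2 : is_lim_seq (sum_n b) B) by exact HB.
  pose proof (is_lim_seq_le _ _ _ _ (norm_sum_n_le t b Hb) H1 H2). exact H.
Qed.

Lemma series_terms_bounded (t : nat -> C) s :
  is_series t s -> exists K, forall n, Cmod (t n) <= K.
Proof.
  intros Ht.
  destruct (filterlim_bounded (V := C_NormedModule) (sum_n t)) as [M HM].
  { exists s. exact Ht. }
  exists (Rmax (Cmod (t O)) (2 * M)). intros [|n].
  - apply Rmax_l.
  - eapply Rle_trans; [|apply Rmax_r].
    assert (E : t (S n) = minus (sum_n t (S n)) (sum_n t n)).
    { rewrite sum_Sn. unfold minus.
      rewrite (plus_comm (sum_n t n)), <- plus_assoc. destruct (t (S n)), (sum_n t n). unfold plus, opp; simpl. unfold Cplus, Copp; simpl. f_equal; ring. }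
    rewrite E; eapply Rle_trans. apply (norm_triangle (V := C_NormedModule)).
    rewrite (norm_opp (V := C_NormedModule)). pose proof (HM (S n)); pose proof (HM n).
    change (norm (sum_n t (S n)) + norm (sum_n t n) <= 2 * M). lra.
Qed.

Lemma abs_conv a f r : entire_with_coeffs a f -> 0 <= r ->
  ex_series (fun j => Cmod (a j) * r ^ j).
Proof.
  intros Hf Hr.
  set (R0 := 2 * r + 1).
  assert (HR0 : 0 < R0) by (unfold R0; lra).
  destruct (series_terms_bounded _ _ (Hf (RtoC R0))) as [K HK].
  apply (ex_series_le (V := R_CompleteNormedModule)) with (b := fun j => K * (r / R0) ^ j).
  - intros j. change (norm (Cmod (a j) * r ^ j)) with (Rabs (Cmod (a j) * r ^ j)).
    specialize (HK j). rewrite Cmod_mult, pow_n_Cpow, Cmod_pow, Cmod_R, Rabs_right in HK by lra.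
    assert (0 <= Cmod (a j)) by apply Cmod_ge_0.
    assert (0 <= r ^ j) by (apply pow_le; lra).
    rewrite Rabs_right by (apply Rle_ge, Rmult_le_pos; auto).
    unfold Rdiv. rewrite Rpow_mult_distr, pow_inv.
    assert (0 < R0 ^ j) by (apply pow_lt; lra).
    apply Rle_trans with (Cmod (a j) * R0 ^ j * (r ^ j * / R0 ^ j)).
    + right. field. lra.
    + apply Rmult_le_compat_r; [|exact HK].
      apply Rmult_le_pos; [lra|]. left; apply Rinv_0_lt_compat; lra.
  - exists (K * / (1 - r / R0)).
    apply (is_series_scal_l (V := R_NormedModule) K (fun j => (r/R0)^j)).
    apply is_series_geom. rewrite Rabs_right.
    + apply Rmult_lt_reg_r with R0; [lra|]. unfold Rdiv; rewrite Rmult_assoc, Rinv_l by lra. unfold R0; lra.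
    + apply Rle_ge, Rmult_le_pos; [lra|]. left; apply Rinv_0_lt_compat; lra.
Qed.

Lemma Cmod_circle r t : 0 <= r -> Cmod ((r * cos t)%R, (r * sin t)%R) = r.
Proof.
  intros Hr. unfold Cmod; cbn [fst snd].
  replace ((r * cos t) ^ 2 + (r * sin t) ^ 2) with (r ^ 2).
  - rewrite <- Rsqr_pow2. rewrite sqrt_Rsqr; auto.
  - replace ((r * cos t) ^ 2 + (r * sin t) ^ 2) with (r^2 * (sin t ^ 2 + cos t ^ 2)) by ring.
    rewrite <- !Rsqr_pow2, sin2_cos2. ring.
Qed.

Lemma f_bound a f r z : entire_with_coeffs a f -> Cmod z = r ->
  Cmod (f z) <= Series (fun j => Cmod (a j) * r ^ j).
Proof.
  intros Hf Hz. assert (Hr : 0 <= r) by (rewrite <- Hz; apply Cmod_ge_0).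
  apply series_norm_le with (t := fun j => (a j * pow_n z j)%C) (b := fun j => Cmod (a j) * r ^ j).
  - apply Hf.
  - intros j. rewrite Cmod_mult, pow_n_Cpow, Cmod_pow, Hz. right; reflexivity.
  - apply Series_correct. apply (abs_conv a f r Hf Hr).
Qed.

Lemma mm_bound a f r t : entire_with_coeffs a f -> 0 <= r ->
  Cmod (f ((r * cos t)%R, (r * sin t)%R)) <= max_modulus f r.
Proof.
  intros Hf Hr. unfold max_modulus.
  set (E := fun y : R => exists t : R, y = Cmod (f ((r * cos t)%R, (r * sin t)%R))).
  set (B := Series (fun j => Cmod (a j) * r ^ j)).
  destruct (Lub_Rbar_correct E) as [Hub Hlub].
  assert (H1 : Rbar_le (Lub_Rbar E) B).
  { apply Hlub. intros y [t' ->]. simpl. apply (f_bound a f r); auto. apply Cmod_circle; auto. }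
  assert (H2 : Rbar_le (Cmod (f ((r * cos t)%R, (r * sin t)%R))) (Lub_Rbar E)).
  { apply Hub. exists t. reflexivity. }
  destruct (Lub_Rbar E); simpl in *; tauto.
Qed.

Fixpoint csum (g : nat -> C) (n : nat) : C :=
  match n with O => 0%C | S n => (csum g n + g n)%C end.

Lemma csum_scal c g n : csum (fun m => c * g m)%C n = (c * csum g n)%C.
Proof. induction n; simpl; [ring|]. rewrite IHn. ring. Qed.

Lemma csum_ext g h n : (forall m, g m = h m) -> csum g n = csum h n.
Proof. intros H; induction n; simpl; [reflexivity|]. rewrite IHn, H. reflexivity. Qed.

Lemma csum_series (F : nat -> nat -> C) (v : nat -> C) n :
  (forall m, is_series (F m) (v m)) ->
  is_series (fun j => csum (fun m => F m j) n) (csum v n).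
Proof.
  intros H. induction n.
  - simpl. unfold is_series.
    apply (filterlim_ext (fun _ => RtoC 0)).
    + intros j. induction j.
      * rewrite sum_O. reflexivity.
      * rewrite sum_Sn, <- IHj. unfold plus; simpl. ring.
    + apply filterlim_const.
  - simpl. pose proof (is_series_plus (V := C_NormedModule) _ _ _ _ IHn (H n)) as H1.
    exact H1.
Qed.

Lemma csum_norm g n B : (forall m, Cmod (g m) <= B) -> Cmod (csum g n) <= INR n * B.
Proof.
  intros H; induction n; simpl csum.
  - rewrite Cmod_0. simpl; lra.
  - eapply Rle_trans. apply Cmod_triangle. rewrite S_INR. specialize (H n). lra.
Qed.

Lemma Cpow_add x a b : Cpow x (a + b) = (Cpow x a * Cpow x b)%C.
Proof. induction a; simpl; [ring|]. rewrite IHa. ring. Qed.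

Lemma Cpow_mul x a b : Cpow x (a * b) = Cpow (Cpow x b) a.
Proof. induction a; simpl; [reflexivity|]. rewrite Cpow_add, IHa. reflexivity. Qed.

Lemma Cpow_comm_exp x a b : Cpow (Cpow x a) b = Cpow (Cpow x b) a.
Proof. rewrite <- !Cpow_mul. f_equal. lia. Qed.

Lemma Cpow_Cmult x y n : Cpow (x * y)%C n = (Cpow x n * Cpow y n)%C.
Proof. induction n; simpl; [ring|]. rewrite IHn. ring. Qed.

Lemma Cpow_1 n : Cpow 1%C n = 1%C.
Proof. induction n; simpl; [reflexivity|]. rewrite IHn. ring. Qed.

Lemma geom_csum q n : ((q - 1) * csum (fun m => Cpow q m) n = Cpow q n - 1)%C.
Proof. induction n; simpl; [ring|]. 
  replace ((q - 1) * (csum (fun m : nat => Cpow q m) n + Cpow q n))%C with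
   ((q - 1) * csum (fun m : nat => Cpow q m) n + (q-1) * Cpow q n)%C by ring.
  rewrite IHn. ring. Qed.

Lemma csum_root q n : Cpow q n = 1%C -> q <> 1%C -> csum (fun m => Cpow q m) n = 0%C.
Proof.
  intros H1 H2. pose proof (geom_csum q n) as G. rewrite H1 in G.
  assert (Hq : (q - 1)%C <> 0%C) by (apply Cminus_eq_contra; auto).
  replace (csum (fun m => Cpow q m) n) with (/ (q - 1) * ((q - 1) * csum (fun m => Cpow q m) n))%C.
  - rewrite G. ring.
  - rewrite Cmult_assoc, Cinv_l by auto. ring.
Qed.

Lemma csum_one n : csum (fun m => Cpow 1%C m) n = RtoC (INR n).
Proof. induction n; simpl csum.
  - reflexivity.
  - rewrite IHn, Cpow_1, S_INR, <- RtoC_plus. reflexivity. Qed.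

Definition Cw (th : R) : C := (cos th, sin th).

Lemma Cpow_Cw th m : Cpow (Cw th) m = Cw (INR m * th).
Proof.
  induction m; simpl Cpow.
  - unfold Cw. simpl. rewrite Rmult_0_l, cos_0, sin_0. reflexivity.
  - rewrite IHm. unfold Cw, Cmult. cbn [fst snd]. rewrite S_INR.
    replace ((INR m + 1) * th) with (th + INR m * th) by ring.
    rewrite cos_plus, sin_plus. f_equal; ring.
Qed.

Lemma Cmod_Cw th : Cmod (Cw th) = 1.
Proof.
  unfold Cw. pose proof (Cmod_circle 1 th) as H.
  rewrite !Rmult_1_l in H. apply H. lra.
Qed.

Lemma Cw_N N : (0 < N)%nat -> Cpow (Cw (2 * PI / INR N)) N = RtoC 1.
Proof.
  intros HN. rewrite Cpow_Cw. assert (0 < INR N) by (apply lt_0_INR; auto).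
  replace (INR N * (2 * PI / INR N)) with (2 * PI) by (field; lra).
  unfold Cw. rewrite cos_2PI, sin_2PI. reflexivity.
Qed.

Lemma Cw_ne1 N e : (0 < e < 2 * N)%nat -> e <> N ->
  Cpow (Cw (2 * PI / INR N)) e <> RtoC 1.
Proof.
  intros [He1 He2] HeN Heq. rewrite Cpow_Cw in Heq. unfold Cw in Heq.
  injection Heq as Hc Hs.
  assert (HN : 0 < INR N) by (apply lt_0_INR; lia).
  assert (HPI := PI_RGT_0).
  destruct (sin_eq_0_0 _ Hs) as [z Hz].
  assert (Hz2 : IZR z = 2 * INR e / INR N).
  { apply Rmult_eq_reg_r with PI; [|lra]. rewrite <- Hz. field. lra. }
  assert (He : 0 < INR e) by (apply lt_0_INR; lia).
  assert (He' : INR e < 2 * INR N).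
  { replace 2 with (INR 2) by reflexivity. rewrite <- mult_INR. apply lt_INR. lia. }
  assert (Hz0 : (0 < z)%Z).
  { apply lt_IZR. rewrite Hz2. apply Rdiv_lt_0_compat; lra. }
  assert (Hz4 : (z < 4)%Z).
  { apply lt_IZR. rewrite Hz2. apply Rmult_lt_reg_r with (INR N); [lra|].
    unfold Rdiv. rewrite Rmult_assoc, Rinv_l by lra. simpl. lra. }
  assert (Hcases : z = 1%Z \/ z = 2%Z \/ z = 3%Z) by lia.
  destruct Hcases as [-> | [-> | ->]].
  - rewrite Hz in Hc. simpl in Hc. rewrite Rmult_1_l, cos_PI in Hc. lra.
  - apply HeN. apply INR_eq.
    apply (Rmult_eq_compat_r (INR N)) in Hz2. unfold Rdiv in Hz2.
    rewrite Rmult_assoc, Rinv_l, Rmult_1_r in Hz2 by lra. simpl in Hz2. lra.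
  - rewrite Hz in Hc. replace (IZR 3 * PI) with (PI + 2 * INR 1 * PI) in Hc by (simpl; ring).
    rewrite cos_period, cos_PI in Hc. lra.
Qed.

Lemma sum_n_single (t : nat -> C) k n :
  (forall j, (j <= n)%nat -> j <> k -> t j = RtoC 0) ->
  sum_n t n = if Nat.leb k n then t k else RtoC 0.
Proof.
  induction n; intros H.
  - rewrite sum_O. destruct k; simpl; [reflexivity|]. apply H; lia.
  - rewrite sum_Sn, IHn by (intros; apply H; lia).
    destruct (Nat.leb_spec k n); destruct (Nat.leb_spec k (S n)); try lia.
    + rewrite (H (S n)) by lia. unfold plus; simpl. ring.
    + assert (k = S n) by lia. subst. unfold plus; simpl. ring.
    + rewrite (H (S n)) by lia. unfold plus; simpl. ring.
Qed.

Lemma Cmod_Cpow_Cw th e m : Cmod (Cpow (Cpow (Cw th) e) m) = 1.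
Proof. rewrite !Cmod_pow, Cmod_Cw, !pow1. reflexivity. Qed.

Lemma cauchy_core a f r k N : entire_with_coeffs a f -> 0 < r -> (k < N)%nat ->
  Cmod (a k) * r ^ k <= max_modulus f r +
     (Series (fun j => Cmod (a j) * r ^ j) - sum_n (fun j => Cmod (a j) * r ^ j) (pred N)).
Proof.
  intros Hf Hr HkN.
  set (b := fun j => Cmod (a j) * r ^ j).
  assert (Hb : ex_series b) by (apply (abs_conv a f r Hf); lra).
  set (M := max_modulus f r).
  set (th := 2 * PI / INR N). set (w := Cw th).
  set (z := (fun m : nat => ((r * cos (INR m * th))%R, (r * sin (INR m * th))%R) : C) : nat -> C).
  assert (Hz : forall m, z m = (RtoC r * Cpow w m)%C).
  { intros m. unfold z, w. rewrite Cpow_Cw. unfold Cw, Cmult, RtoC. simpl. f_equal; ring. }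
  set (c := fun m => Cpow (Cpow w (N - k)) m).
  set (F := fun m j => (c m * (a j * pow_n (z m) j))%C).
  set (v := fun m => (c m * f (z m))%C).
  assert (HF : forall m, is_series (F m) (v m)).
  { intros m. pose proof (is_series_scal_l (V := C_NormedModule) (c m) _ _ (Hf (z m))) as H.
    eapply is_series_ext; [|exact H]. intros j. reflexivity. }
  pose proof (csum_series F v N HF) as Hs.
  set (SS := csum v N). set (t := fun j => csum (fun m => F m j) N).
  set (G := fun e => csum (fun m => Cpow (Cpow w e) m) N).
  assert (Ht : forall j, t j = (a j * Cpow (RtoC r) j * G (j + (N - k))%nat)%C).
  { intros j. unfold t, G. rewrite <- csum_scal. apply csum_ext. intros m.
    unfold F, c. rewrite (pow_n_Cpow (z m) j), (Hz m), Cpow_Cmult, (Cpow_comm_exp w m j), (Cpow_add w j (N - k)), Cpow_Cmult. ring. }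
  assert (HG : forall e, Cmod (G e) <= INR N).
  { intros e. unfold G. rewrite <- (Rmult_1_r (INR N)). apply csum_norm. intros m.
    unfold w. rewrite Cmod_Cpow_Cw. lra. }
  assert (HwN : Cpow w N = RtoC 1) by (apply Cw_N; lia).
  assert (HS : Cmod SS <= INR N * M).
  { unfold SS. apply csum_norm. intros m. unfold v, c. rewrite Cmod_mult. unfold w. rewrite Cmod_Cpow_Cw.
    rewrite Rmult_1_l. unfold z, M. apply (mm_bound a f r); auto; lra. }
  assert (Hzero : forall j, (j <= pred N)%nat -> j <> k -> t j = RtoC 0).
  { intros j Hj Hjk. rewrite Ht. unfold G. rewrite csum_root.
    - ring.
    - rewrite Cpow_comm_exp, HwN. apply Cpow_1.
    - apply Cw_ne1; lia. }
  assert (Htk : t k = (a k * Cpow (RtoC r) k * RtoC (INR N))%C).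
  { rewrite Ht. unfold G. replace (k + (N - k))%nat with N by lia. rewrite HwN. rewrite csum_one. reflexivity. }
  pose proof (sum_n_single t k (pred N) Hzero) as Hsum.
  destruct (Nat.leb_spec k (pred N)); [|lia].
  set (l := (SS - t k)%C).
  assert (Htail : is_series (fun i => t (N + i)%nat) l).
  { apply is_series_incr_n; [lia|].
    match goal with |- is_series _ ?X => assert (E : X = SS) end.
    { transitivity (plus l (t k)).
      - f_equal. exact Hsum.
      - unfold l, plus; simpl. ring. }
    rewrite E. exact Hs. }
  set (T := Series b - sum_n b (pred N)).
  assert (HbT : is_series (fun i => b (N + i)%nat) T).
  { apply is_series_incr_n; [lia|].
    match goal with |- is_series _ ?X => assert (E : X = Series b) end.
    { unfold T, plus; simpl. assert (E2 : forall x y : R, x - y + y = x) by (intros; ring). apply E2. }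
    rewrite E. apply Series_correct; auto. }
  assert (Hl : Cmod l <= INR N * T).
  { apply series_norm_le with (t := fun i => t (N + i)%nat) (b := fun i => INR N * b (N + i)%nat).
    - exact Htail.
    - intros i. rewrite Ht, !Cmod_mult, Cmod_pow, Cmod_R, Rabs_pos_eq by lra.
      unfold b. assert (0 <= Cmod (a (N + i)%nat) * r ^ (N + i)).
      { apply Rmult_le_pos; [apply Cmod_ge_0| apply pow_le; lra]. }
      rewrite (Rmult_comm (INR N)). apply Rmult_le_compat_l; auto.
    - apply (is_series_scal_l (V := R_NormedModule) (INR N) _ _ HbT). }
  assert (HN : 0 < INR N) by (apply lt_0_INR; lia).
  assert (Hk : Cmod (t k) = Cmod (a k) * r ^ k * INR N).
  { rewrite Htk, !Cmod_mult, Cmod_pow, !Cmod_R, Rabs_pos_eq, Rabs_pos_eq by lra. reflexivity. }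
  assert (Htk2 : t k = (SS - l)%C) by (unfold l; ring).
  assert (Hineq : Cmod (t k) <= Cmod SS + Cmod l).
  { rewrite Htk2. eapply Rle_trans. apply Cmod_triangle. rewrite <- (Cmod_opp l) . right; reflexivity. }
  rewrite Hk in Hineq.
  apply Rmult_le_reg_r with (INR N); auto. fold b M. fold T. lra.
Qed.

Lemma cauchy_est a f r k : entire_with_coeffs a f -> 0 < r ->
  Cmod (a k) * r ^ k <= max_modulus f r.
Proof.
  intros Hf Hr. apply le_epsilon. intros eps He.
  set (b := fun j => Cmod (a j) * r ^ j).
  assert (Hb : is_lim_seq (sum_n b) (Series b)).
  { apply Series_correct. apply (abs_conv a f r Hf); lra. }
  apply is_lim_seq_spec in Hb. destruct (Hb (mkposreal eps He)) as [N0 HN0].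
  pose proof (cauchy_core a f r k (S (max N0 k)) Hf Hr ltac:(lia)) as H.
  specialize (HN0 (max N0 k) ltac:(lia)). simpl in HN0, H.
  apply Rabs_lt_between in HN0. fold b in H. lra.
Qed.

Lemma first_nonzero (a : nat -> C) : transcendental_coeffs a ->
  exists k, (forall j, (j < k)%nat -> a j = RtoC 0) /\ a k <> RtoC 0.
Proof.
  intros Ht. destruct (Ht O) as [n0 [_ Hn0]].
  revert Hn0. induction n0 as [n0 IH] using (well_founded_induction Wf_nat.lt_wf). intros Hn0.
  destruct (classic (exists j, (j < n0)%nat /\ a j <> RtoC 0)) as [[j [Hj Hj']]|Hno].
  - exact (IH j Hj Hj').
  - exists n0. split; auto. intros j Hj. apply NNPP. intros Hc. apply Hno. eauto.
Qed.

Lemma pow2_ge n : INR n <= 2 ^ n.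
Proof.
  induction n; [simpl; lra|]. rewrite S_INR. simpl pow.
  assert (1 <= 2 ^ n) by (apply pow_R1_Rle; lra). lra.
Qed.

Lemma radius_unbounded (M : R -> R) (rd : nat -> R) (k : nat) (c : R) :
  0 < c -> (forall x, 0 < x -> c * x ^ k <= M x) ->
  (forall n, (k < n)%nat -> 0 < rd n /\ forall s, 0 < s -> s <> rd n -> M (rd n) / rd n ^ n < M s / s ^ n) ->
  forall B, 0 < B -> exists N, forall n, (N <= n)%nat -> B < rd n.
Proof.
  intros Hc HM Hq B HB.
  set (C0 := M (2 * B) / (c * B ^ k)).
  destruct (INR_unbounded C0) as [N0 HN0].
  exists (S (max N0 k)). intros n Hn.
  destruct (Hq n ltac:(lia)) as [Hx Hmin].
  set (x := rd n) in *.
  apply Rnot_le_lt. intros HxB.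
  assert (Hs := Hmin (2 * B) ltac:(lra) ltac:(lra)).
  assert (HBk : 0 < B ^ k) by (apply pow_lt; lra).
  assert (Hxk : 0 < x ^ k) by (apply pow_lt; lra).
  assert (Hxn : 0 < x ^ n) by (apply pow_lt; lra).
  assert (H2B : 0 < (2 * B) ^ n) by (apply pow_lt; lra).
  assert (HMx := HM x Hx).
  assert (H1 : M x * (2 * B) ^ n < M (2 * B) * x ^ n).
  { apply (Rmult_lt_compat_r (x ^ n * (2 * B) ^ n)) in Hs; [|apply Rmult_lt_0_compat; auto].
    replace (M x / x ^ n * (x ^ n * (2 * B) ^ n)) with (M x * (2 * B) ^ n) in Hs by (field; lra).
    replace (M (2 * B) / (2 * B) ^ n * (x ^ n * (2 * B) ^ n)) with (M (2 * B) * x ^ n) in Hs by (field; lra).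
    exact Hs. }
  set (d := (n - k)%nat).
  assert (E1 : (2 * B) ^ n = (2 ^ k * 2 ^ d) * (B ^ k * B ^ d)).
  { replace n with (k + d)%nat by (unfold d; lia). rewrite Rpow_mult_distr, !pow_add. ring. }
  assert (E2 : x ^ n = x ^ k * x ^ d).
  { replace n with (k + d)%nat by (unfold d; lia). apply pow_add. }
  rewrite E1, E2 in H1.
  assert (Hxd : x ^ d <= B ^ d) by (apply pow_incr; lra).
  assert (HBd : 0 < B ^ d) by (apply pow_lt; lra).
  assert (Hxd0 : 0 < x ^ d) by (apply pow_lt; lra).
  assert (HMs : 0 < M (2 * B)).
  { assert (0 < M x * ((2 ^ k * 2 ^ d) * (B ^ k * B ^ d))).
    { apply Rmult_lt_0_compat; [|apply Rmult_lt_0_compat; apply Rmult_lt_0_compat; auto; apply pow_lt; lra].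
      nra. }
    assert (0 < M (2 * B) * (x ^ k * x ^ d)) by lra. 
    assert (0 < x ^ k * x ^ d) by nra. nra. }
  (* c x^k 2^n B^k B^d <= M x 2^n B^n < M s x^k x^d <= M s x^k B^d *)
  assert (H2 : c * 2 ^ (k + d) * B ^ k < M (2 * B)).
  { rewrite pow_add.
    assert (Hp : 0 < 2 ^ k * 2 ^ d) by (apply Rmult_lt_0_compat; apply pow_lt; lra).
    assert (H3 : c * x ^ k * ((2 ^ k * 2 ^ d) * (B ^ k * B ^ d)) < M (2 * B) * (x ^ k * B ^ d)).
    { apply Rle_lt_trans with (M x * ((2 ^ k * 2 ^ d) * (B ^ k * B ^ d))).
      - apply Rmult_le_compat_r; [|exact HMx]. apply Rmult_le_pos; nra.
      - eapply Rlt_le_trans; [exact H1|]. apply Rmult_le_compat_l; [lra|].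
        apply Rmult_le_compat_l; lra. }
    assert (H4 : (c * (2 ^ k * 2 ^ d) * B ^ k) * (x ^ k * B ^ d) < M (2 * B) * (x ^ k * B ^ d)).
    { replace (c * (2 ^ k * 2 ^ d) * B ^ k * (x ^ k * B ^ d)) with
        (c * x ^ k * (2 ^ k * 2 ^ d * (B ^ k * B ^ d))) by ring. exact H3. }
    apply Rmult_lt_reg_r in H4; [exact H4|]. nra. }
  replace (k + d)%nat with n in H2 by (unfold d; lia).
  assert (H5 : 2 ^ n < C0).
  { unfold C0. apply Rmult_lt_reg_r with (c * B ^ k); [nra|].
    unfold Rdiv. rewrite Rmult_assoc, Rinv_l by nra. nra. }
  pose proof (pow2_ge n). assert (INR N0 <= INR n) by (apply le_INR; lia). lra.
Qed.

Lemma exp_bounds y : 0 < y <= 1/4 ->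
  exp y <= 1 + y + 2 * y * y /\ exp y <= 2 /\ 1 - y <= exp (- y) /\ exp (- y) <= 1 - y + y * y
  /\ 0 < exp (-y).
Proof.
  intros Hy. pose proof (exp_ineq1_le y) as I1. pose proof (exp_ineq1_le (-y)) as I2.
  assert (HED : exp y * exp (- y) = 1) by (rewrite <- exp_plus; replace (y + - y) with 0 by ring; apply exp_0).
  pose proof (exp_pos y). pose proof (exp_pos (-y)).
  assert (H1 : exp y * (1 - y) <= 1) by nra.
  assert (H2 : exp y <= 1 + 2 * y) by nra.
  assert (H3 : exp (-y) * (1 + y) <= 1) by nra.
  repeat split; nra.
Qed.

Lemma Rpower_scale x h rho : 0 < x -> Rpower (x * exp h) rho = Rpower x rho * exp (rho * h).
Proof.
  intros Hx. unfold Rpower. rewrite ln_mult, ln_exp by (auto; apply exp_pos).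
  rewrite <- exp_plus. f_equal. ring.
Qed.

Lemma min_ln (M : R -> R) x s n : 0 < x -> 0 < s -> 0 < M x -> 0 < M s ->
  M x / x ^ n < M s / s ^ n -> ln (M x) - INR n * ln x < ln (M s) - INR n * ln s.
Proof.
  intros Hx Hs HMx HMs H.
  assert (0 < x ^ n) by (apply pow_lt; lra). assert (0 < s ^ n) by (apply pow_lt; lra).
  apply ln_increasing in H; [|apply Rdiv_lt_0_compat; auto].
  rewrite !ln_div, !ln_pow in H by auto. exact H.
Qed.

Lemma HQ_aux (m h tau rho P : R) : tau <> 0 -> rho <> 0 -> P <> 0 ->
  m * h = m / (tau * rho * P) * tau * (rho * h) * P.
Proof. intros. field. auto. Qed.

Lemma q_limit (M : R -> R) (rd : nat -> R) (k : nat) rho tau :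
  0 < rho -> 0 < tau ->
  (forall x, 0 < x -> 0 < M x) ->
  is_lim (fun r => ln (M r) / Rpower r rho) p_infty tau ->
  (forall n, (k < n)%nat -> 0 < rd n /\ forall s, 0 < s -> s <> rd n -> M (rd n) / rd n ^ n < M s / s ^ n) ->
  (forall B, 0 < B -> exists N, forall n, (N <= n)%nat -> B < rd n) ->
  is_lim_seq (fun n => INR n / (tau * rho * Rpower (rd n) rho)) 1.
Proof.
  intros Hrho Htau HMp Hlim Hq Hunb.
  apply is_lim_seq_spec. intros eps.
  apply is_lim_spec in Hlim.
  set (e := Rmin eps 1).
  assert (He : 0 < e <= 1) by (unfold e; pose proof (cond_pos eps); split; [apply Rmin_glb_lt; lra|apply Rmin_r]).
  assert (Hee : e <= eps) by apply Rmin_l.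
  set (y := e / 4). assert (Hy : 0 < y <= 1/4) by (unfold y; lra).
  set (h := y / rho). assert (Hh : 0 < h) by (unfold h; apply Rdiv_lt_0_compat; lra).
  assert (Hrh : rho * h = y) by (unfold h; field; lra).
  set (dl := tau * y * e / 8).
  assert (Hdl : 0 < dl) by (unfold dl; apply Rdiv_lt_0_compat; [apply Rmult_lt_0_compat; [nra|lra]|lra]).
  destruct (Hlim (mkposreal dl Hdl)) as [R0 HR0]. simpl in HR0.
  set (B := Rmax 1 (Rmax R0 (R0 * exp h))).
  assert (HB1 : 1 <= B) by apply Rmax_l.
  assert (HB2 : R0 <= B) by (eapply Rle_trans; [apply Rmax_l|apply Rmax_r]).
  assert (HB3 : R0 * exp h <= B) by (eapply Rle_trans; [apply Rmax_r|apply Rmax_r]).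
  destruct (Hunb B ltac:(lra)) as [N1 HN1].
  exists (max N1 (S k)). intros n Hn.
  specialize (HN1 n ltac:(lia)). destruct (Hq n ltac:(lia)) as [Hx Hmin].
  set (x := rd n) in *.
  destruct (exp_bounds y Hy) as [E1 [E2 [D1 [D2 D3]]]].
  set (E := exp y) in *. set (D := exp (- y)) in *.
  assert (HE : 0 < E) by apply exp_pos.
  assert (Hexph : 1 < exp h) by (rewrite <- exp_0; apply exp_increasing; lra).
  set (s1 := x * exp h). set (s2 := x * exp (- h)).
  assert (Hs1 : 0 < s1) by (unfold s1; apply Rmult_lt_0_compat; [lra|apply exp_pos]).
  assert (Hs2 : 0 < s2) by (unfold s2; apply Rmult_lt_0_compat; [lra|apply exp_pos]).
  assert (Hs1x : x < s1) by (unfold s1; nra).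
  assert (Hs2R : R0 < s2).
  { unfold s2. assert (Hm : exp h * exp (- h) = 1) by (rewrite <- exp_plus; replace (h + - h) with 0 by ring; apply exp_0).
    assert (0 < exp (- h)) by apply exp_pos. nra. }
  assert (Hs2x : s2 < x).
  { unfold s2. assert (exp (- h) < 1) by (rewrite <- exp_0; apply exp_increasing; lra). nra. }
  set (P := Rpower x rho). assert (HP : 0 < P) by apply exp_pos.
  assert (HP1 : Rpower s1 rho = P * E) by (unfold s1, P, E; rewrite Rpower_scale by lra; rewrite Hrh; reflexivity).
  assert (HP2 : Rpower s2 rho = P * D).
  { unfold s2, P, D. rewrite Rpower_scale by lra. f_equal. f_equal. rewrite <- Hrh. ring. }
  set (u := fun r => ln (M r) / Rpower r rho) in *.
  assert (Hu : forall r, ln (M r) = u r * Rpower r rho).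
  { intros r. unfold u. field. apply Rgt_not_eq, exp_pos. }
  assert (U0 : tau - dl < u x < tau + dl) by (apply Rabs_lt_between'; apply HR0; lra).
  assert (U1 : tau - dl < u s1 < tau + dl) by (apply Rabs_lt_between'; apply HR0; lra).
  assert (U2 : tau - dl < u s2 < tau + dl) by (apply Rabs_lt_between'; apply HR0; lra).
  set (Q := INR n / (tau * rho * P)).
  assert (HQ : INR n * h = Q * tau * y * P).
  { unfold Q. rewrite <- Hrh. apply HQ_aux; lra. }
  assert (Hup : INR n * h < ln (M s1) - ln (M x)).
  { pose proof (min_ln M x s1 n Hx Hs1 (HMp x Hx) (HMp s1 Hs1) (Hmin s1 Hs1 ltac:(lra))) as H.
    unfold s1 in H. rewrite ln_mult, ln_exp in H by (auto; apply exp_pos). fold s1 in H. lra. }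
  assert (Hlo : ln (M x) - ln (M s2) < INR n * h).
  { pose proof (min_ln M x s2 n Hx Hs2 (HMp x Hx) (HMp s2 Hs2) (Hmin s2 Hs2 ltac:(lra))) as H.
    unfold s2 in H. rewrite ln_mult, ln_exp in H by (auto; apply exp_pos). fold s2 in H. lra. }
  rewrite !Hu, HP1, HQ in Hup. rewrite !Hu, HP2, HQ in Hlo. fold P in Hup, Hlo.
  assert (Hup2 : Q * tau * y < u s1 * E - u x).
  { apply Rmult_lt_reg_r with P; auto. replace ((u s1 * E - u x) * P) with (u s1 * (P * E) - u x * P) by ring. exact Hup. }
  assert (Hlo2 : u x - u s2 * D < Q * tau * y).
  { apply Rmult_lt_reg_r with P; auto. replace ((u x - u s2 * D) * P) with (u x * P - u s2 * (P * D)) by ring. exact Hlo. }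
  assert (F1 : u s1 * E < (tau + dl) * E) by (apply Rmult_lt_compat_r; lra).
  assert (F2 : (tau + dl) * D > u s2 * D) by (apply Rmult_lt_compat_r; lra).
  assert (Hty : 0 < tau * y) by nra.
  unfold dl in *.
  apply Rabs_lt_between'. split.
  - assert (Q * (tau * y) > (1 - e / 2) * (tau * y)).
    { assert (tau * D <= tau * (1 - y + y * y)) by (apply Rmult_le_compat_l; lra).
      assert (tau * y * e / 8 * D <= tau * y * e / 8 * 1) by (apply Rmult_le_compat_l; nra).
      assert (tau * (y * y) <= tau * y * e / 4) by (unfold y; nra).
      nra. }
    apply Rmult_lt_reg_r in H; [|exact Hty]. lra.
  - assert (Q * (tau * y) < (1 + e) * (tau * y)).
    { assert (tau * E <= tau * (1 + y + 2 * y * y)) by (apply Rmult_le_compat_l; lra).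
      assert (tau * y * e / 8 * E <= tau * y * e / 8 * 2) by (apply Rmult_le_compat_l; nra).
      assert (tau * (y * y) <= tau * y * e / 4) by (unfold y; nra).
      nra. }
    apply Rmult_lt_reg_r in H; [|exact Hty]. lra.
Qed.

Theorem theorem8p2 (a : nat -> C) (f : C -> C) (rho tau : R) (rd : nat -> R) :
  entire_with_coeffs a f ->
  transcendental_coeffs a ->
  perfectly_regular_growth f rho tau ->
  (forall k : nat, (forall j : nat, (j < k)%nat -> a j = 0%C) -> a k <> 0%C ->
     forall n : nat, (k < n)%nat -> is_quasi_optimal_radius f n (rd n)) ->
  is_lim_seq (fun n : nat => rd n / Rpower (INR n / (tau * rho)) (1 / rho)) 1.
Proof.
  intros Hf Htr Hprg Hq.
  destruct (first_nonzero a Htr) as [k [Hk0 Hk]].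
  assert (Hq' := Hq k Hk0 Hk). clear Hq.
  destruct Hprg as [Hrho [_ [Htau Hlim]]].
  set (Mf := max_modulus f) in *.
  set (c := Cmod (a k)).
  assert (Hc : 0 < c) by (apply Cmod_gt_0; exact Hk).
  assert (HM : forall x, 0 < x -> c * x ^ k <= Mf x) by (intros x Hx; apply (cauchy_est a f x k Hf Hx)).
  assert (HMp : forall x, 0 < x -> 0 < Mf x).
  { intros x Hx. eapply Rlt_le_trans; [|apply HM; auto]. apply Rmult_lt_0_compat; auto. apply pow_lt; auto. }
  assert (Hq2 : forall n, (k < n)%nat -> 0 < rd n /\ forall s, 0 < s -> s <> rd n -> Mf (rd n) / rd n ^ n < Mf s / s ^ n)
    by (intros n Hn; exact (Hq' n Hn)).
  pose proof (radius_unbounded Mf rd k c Hc HM Hq2) as Hunb.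
  pose proof (q_limit Mf rd k rho tau Hrho Htau HMp Hlim Hq2 Hunb) as Hql.
  set (g := fun q => / Rpower q (1 / rho)).
  assert (Hgc : continuity_pt g 1).
  { apply continuity_pt_filterlim. apply (ex_derive_continuous (K := R_AbsRing) (V := R_NormedModule)).
    unfold g, Rpower. auto_derive. split; [lra|]. split; [|auto]. apply Rgt_not_eq, exp_pos. }
  pose proof (is_lim_seq_continuous g _ 1 Hgc Hql) as H.
  assert (Hg1 : g 1 = 1) by (unfold g, Rpower; rewrite ln_1, Rmult_0_r, exp_0; apply Rinv_1).
  rewrite Hg1 in H.
  eapply is_lim_seq_ext_loc; [|exact H].
  destruct (Hunb 1 ltac:(lra)) as [N HN].
  exists (max N (S k)). intros n Hn.
  destruct (Hq2 n ltac:(lia)) as [Hx _]. set (x := rd n) in *.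
  set (P := Rpower x rho). assert (HP : 0 < P) by apply exp_pos.
  assert (Hn0 : 0 < INR n) by (apply lt_0_INR; lia).
  set (q := INR n / (tau * rho * P)).
  assert (Hqpos : 0 < q) by (unfold q; apply Rdiv_lt_0_compat; auto; apply Rmult_lt_0_compat; nra).
  assert (E : INR n / (tau * rho) = q * P) by (unfold q; field; lra).
  unfold g. fold P. fold q. rewrite E, <- Rpower_mult_distr by auto.
  unfold P. rewrite Rpower_mult. replace (rho * (1 / rho)) with 1 by (field; lra). rewrite Rpower_1 by auto.
  assert (0 < Rpower q (1 / rho)) by apply exp_pos.
  field. lra.
Qed.
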